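(* Let $n\ge1$ and let $G\subset GL(2n,\mathbb{R})$ be the subgroup of block matrices $E=\begin{pmatrix}S&O\\C&T\end{pmatrix}$ with $S,T\in GL(n,\mathbb{R})$, $C\in M(n,\mathbb{R})$, with the subspace topology. Let $X=G\times\mathbb{R}^n$ (product topology) with the quandle operation $(E_0,x_0)*(E_1,x_1)=(E_1E_0E_1^{-1},\ S_1x_0+(I-S_1)x_1)$, where $E_i=\begin{pmatrix}S_i&O\\C_i&T_i\end{pmatrix}$. Let $A=\mathbb{R}^n$ with $\eta_{(E_0,x_0),(E_1,x_1)}(a)=T_1a$ and $\tau_{(E_0,x_0),(E_1,x_1)}(a)=(I-T_1)a$. Then $(A,\eta,\tau)$ is a topological $X$-module and $H^2_{GC}(X,A)\neq0$; a nontrivial class is given by $\kappa_{(E_0,x_0),(E_1,x_1)}=C_1(x_0-x_1)$.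
   Context: For a topological quandle $X$, an $X$-module is a triple $(A,\eta,\tau)$ where $A$ is a topological abelian group, $\eta_{x,y}:A\to A$ ($x,y\in X$) are continuous group automorphisms and $\tau_{x,y}:A\to A$ continuous group endomorphisms with: $\eta_{x*y,z}\eta_{x,y}=\eta_{x*z,y*z}\eta_{x,z}$; $\eta_{x*y,z}\tau_{x,y}=\tau_{x*z,y*z}\eta_{y,z}$; $\tau_{x*y,z}=\eta_{x*z,y*z}\tau_{x,z}+\tau_{x*z,y*z}\tau_{y,z}$; $\tau_{x,x}+\eta_{x,x}=\mathrm{id}_A$. The second continuous generalized cohomology group is $H^2_{GC}(X,A)=Z^2/B^2$, where $Z^2$ is the group of continuous maps $\kappa:X\times X\to A$, $(x,y)\mapsto\kappa_{x,y}$, with $\kappa_{x,x}=0$ and $\eta_{x*y,z}\kappa_{x,y}+\kappa_{x*y,z}=\eta_{x*z,y*z}\kappa_{x,z}+\tau_{x*z,y*z}\kappa_{y,z}+\kappa_{x*z,y*z}$ for all $x,y,z$ (equivalently, $(x,a)*(y,b)=(x*y,\eta_{x,y}(a)+\tau_{x,y}(b)+\kappa_{x,y})$ is a quandle operation on $X\times A$), and $B^2$ consists of the maps $(x,y)\mapsto\eta_{x,y}(f(x))+\tau_{x,y}(f(y))-f(x*y)$ for continuous $f:X\to A$. *)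

(* Defs.v *)
From Stdlib Require Import Reals ClassicalEpsilon.
From mathcomp Require Import all_boot.

Local Open Scope R_scope.

Definition vec (n : nat) := 'I_n -> R.
Definition mat (m k : nat) := 'I_m -> 'I_k -> R.

Definition vzero {n} : vec n := fun _ => 0.
Definition vadd {n} (x y : vec n) : vec n := fun i => x i + y i.
Definition vsub {n} (x y : vec n) : vec n := fun i => x i - y i.

Definition mzero {m k} : mat m k := fun _ _ => 0.
Definition idm (n : nat) : mat n n := fun i j => if i == j then 1 else 0.
Definition msub {m k} (A B : mat m k) : mat m k := fun i j => A i j - B i j.
Definition mmul {m k p} (A : mat m k) (B : mat k p) : mat m p :=
  fun i j => \big[Rplus/0]_(l < k) (A i l * B l j).
Definition mvmul {m k} (A : mat m k) (x : vec k) : vec m :=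
  fun i => \big[Rplus/0]_(l < k) (A i l * x l).

Definition invertible {n} (A : mat n n) : Prop :=
  exists B : mat n n, mmul A B = idm n /\ mmul B A = idm n.
(* the inverse matrix (chosen; unique when A is invertible) *)
Definition minv {n} (A : mat n n) : mat n n :=
  epsilon (inhabits (idm n)) (fun B => mmul A B = idm n /\ mmul B A = idm n).

Definition blkS {n} (E : mat (n + n) (n + n)) : mat n n :=
  fun i j => E (lshift n i) (lshift n j).
Definition blkO {n} (E : mat (n + n) (n + n)) : mat n n :=
  fun i j => E (lshift n i) (rshift n j).
Definition blkC {n} (E : mat (n + n) (n + n)) : mat n n :=
  fun i j => E (rshift n i) (lshift n j).
Definition blkT {n} (E : mat (n + n) (n + n)) : mat n n :=
  fun i j => E (rshift n i) (rshift n j).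

Definition inG {n} (E : mat (n + n) (n + n)) : Prop :=
  blkO E = mzero /\ invertible (blkS E) /\ invertible (blkT E).

Definition pt (n : nat) := (mat (n + n) (n + n) * vec n)%type.
Definition inX {n} (p : pt n) : Prop := inG p.1.

Definition qop {n} (p q : pt n) : pt n :=
  (mmul (mmul q.1 p.1) (minv q.1),
   vadd (mvmul (blkS q.1) p.2) (mvmul (msub (idm n) (blkS q.1)) q.2)).

(* "close d a b": all coordinates differ by less than d (sup-metric balls,
   which generate the Euclidean topology on each finite-dimensional space). *)
Definition vclose {n} (d : R) (x y : vec n) : Prop :=
  forall i, Rabs (x i - y i) < d.
Definition mclose {m k} (d : R) (A B : mat m k) : Prop :=
  forall i j, Rabs (A i j - B i j) < d.
Definition pclose {n} (d : R) (p q : pt n) : Prop :=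
  mclose d p.1 q.1 /\ vclose d p.2 q.2.
Definition prclose {T U} (cT : R -> T -> T -> Prop) (cU : R -> U -> U -> Prop)
  (d : R) (a b : T * U) : Prop := cT d a.1 b.1 /\ cU d a.2 b.2.

Definition cont_on {T U} (cT : R -> T -> T -> Prop) (cU : R -> U -> U -> Prop)
  (P : T -> Prop) (f : T -> U) : Prop :=
  forall x, P x -> forall eps, 0 < eps -> exists del, 0 < del /\
    forall y, P y -> cT del x y -> cU eps (f x) (f y).

Definition PX2 {n} (a : pt n * pt n) : Prop := inX a.1 /\ inX a.2.

Definition is_top_quandle {n} (op : pt n -> pt n -> pt n) : Prop :=
  (forall x y, inX x -> inX y -> inX (op x y)) /\
  (forall x, inX x -> op x x = x) /\
  (forall y, inX y -> exists g : pt n -> pt n,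
      (forall x, inX x -> inX (g x)) /\
      (forall x, inX x -> g (op x y) = x) /\
      (forall x, inX x -> op (g x) y = x) /\
      cont_on pclose pclose inX g) /\
  (forall x y z, inX x -> inX y -> inX z ->
      op (op x y) z = op (op x z) (op y z)) /\
  cont_on (prclose pclose pclose) pclose PX2 (fun a => op a.1 a.2).

Definition additive {n} (f : vec n -> vec n) : Prop :=
  forall a b, f (vadd a b) = vadd (f a) (f b).
Definition bijective_map {n} (f : vec n -> vec n) : Prop :=
  exists g : vec n -> vec n, (forall a, g (f a) = a) /\ (forall a, f (g a) = a).
Definition vcont {n} (f : vec n -> vec n) : Prop :=
  cont_on vclose vclose (fun _ => True) f.

Definition is_top_module {n} (op : pt n -> pt n -> pt n)
  (eta tau : pt n -> pt n -> vec n -> vec n) : Prop :=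
  (forall x y, inX x -> inX y ->
     additive (eta x y) /\ bijective_map (eta x y) /\ vcont (eta x y) /\
     additive (tau x y) /\ vcont (tau x y)) /\
  (forall x y z, inX x -> inX y -> inX z ->
     (forall a, eta (op x y) z (eta x y a) = eta (op x z) (op y z) (eta x z a)) /\
     (forall a, eta (op x y) z (tau x y a) = tau (op x z) (op y z) (eta y z a)) /\
     (forall a, tau (op x y) z a =
                vadd (eta (op x z) (op y z) (tau x z a))
                     (tau (op x z) (op y z) (tau y z a)))) /\
  (forall x, inX x -> forall a, vadd (tau x x a) (eta x x a) = a).

Definition in_Z2 {n} (op : pt n -> pt n -> pt n)
  (eta tau : pt n -> pt n -> vec n -> vec n) (kappa : pt n -> pt n -> vec n) : Prop :=
  cont_on (prclose pclose pclose) vclose PX2 (fun a => kappa a.1 a.2) /\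
  (forall x, inX x -> kappa x x = vzero) /\
  (forall x y z, inX x -> inX y -> inX z ->
     vadd (eta (op x y) z (kappa x y)) (kappa (op x y) z) =
     vadd (vadd (eta (op x z) (op y z) (kappa x z))
                (tau (op x z) (op y z) (kappa y z)))
          (kappa (op x z) (op y z))).

Definition in_B2 {n} (op : pt n -> pt n -> pt n)
  (eta tau : pt n -> pt n -> vec n -> vec n) (kappa : pt n -> pt n -> vec n) : Prop :=
  exists f : pt n -> vec n, cont_on pclose vclose inX f /\
    forall x y, inX x -> inX y ->
      kappa x y = vsub (vadd (eta x y (f x)) (tau x y (f y))) (f (op x y)).

Definition eta7 {n} (p q : pt n) (a : vec n) : vec n := mvmul (blkT q.1) a.
Definition tau7 {n} (p q : pt n) (a : vec n) : vec n :=
  mvmul (msub (idm n) (blkT q.1)) a.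
Definition kappa7 {n} (p q : pt n) : vec n := mvmul (blkC q.1) (vsub p.2 q.2).

(* Main.v *)
Require Import Defs.
From Stdlib Require Import Reals Lra FunctionalExtensionality ClassicalEpsilon.
From mathcomp Require Import all_boot all_algebra.
From mathcomp Require Import Rstruct.
Import GRing.Theory.
Set Warnings "-notation-overridden,-ambiguous-paths".
Section Cont.
Local Open Scope R_scope.
Variables (T : Type) (cT : R -> T -> T -> Prop) (P : T -> Prop).
Hypothesis monoT : forall {d d' x y}, d <= d' -> cT d x y -> cT d' x y.

Definition rc (f : T -> R) := forall x, P x -> forall eps, 0 < eps -> exists del, 0 < del /\
  forall y, P y -> cT del x y -> Rabs (f x - f y) < eps.

Lemma rc_ext f g : (forall t, P t -> f t = g t) -> rc g -> rc f.
Proof.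
move=> E H x Px eps he; have [d [hd Hd]] := H x Px eps he.
exists d; split=> // y Py c; rewrite !E //; exact: Hd.
Qed.

Lemma rc_const c : rc (fun _ => c).
Proof. move=> x _ eps he; exists 1; split; [lra|]=> y _ _. rewrite Rminus_diag Rabs_R0; lra. Qed.

Lemma rc_add f g : rc f -> rc g -> rc (fun t => f t + g t).
Proof.
move=> Hf Hg x Px eps he.
have [d1 [h1 H1]] := Hf x Px (eps/2) ltac:(lra).
have [d2 [h2 H2]] := Hg x Px (eps/2) ltac:(lra).
exists (Rmin d1 d2); split; first by apply: Rmin_pos.
move=> y Py c.
have a1 := H1 y Py (monoT (Rmin_l d1 d2) c).
have a2 := H2 y Py (monoT (Rmin_r d1 d2) c).
replace (f x + g x - (f y + g y)) with ((f x - f y) + (g x - g y)) by ring.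
apply: Rle_lt_trans; first exact: Rabs_triang. lra.
Qed.

Lemma rc_opp f : rc f -> rc (fun t => - f t).
Proof.
move=> Hf x Px eps he; have [d [hd Hd]] := Hf x Px eps he.
exists d; split=> // y Py c.
replace (- f x - - f y) with (- (f x - f y)) by ring. rewrite Rabs_Ropp; exact: Hd.
Qed.

Lemma rc_mul f g : rc f -> rc g -> rc (fun t => f t * g t).
Proof.
move=> Hf Hg x Px eps he.
set a := Rabs (f x) + 1. set b := Rabs (g x).
have ha : 0 < a by (have := Rabs_pos (f x)); rewrite /a; lra.
have hb : 0 <= b by apply: Rabs_pos.
have [d1 [h1 H1]] := Hf x Px (Rmin 1 (eps/(2*(b+1)))) ltac:(apply: Rmin_pos; [lra| apply: Rdiv_lt_0_compat; lra]).
have [d2 [h2 H2]] := Hg x Px (eps/(2*a)) ltac:(apply: Rdiv_lt_0_compat; lra).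
exists (Rmin d1 d2); split; first by apply: Rmin_pos.
move=> y Py c.
have a1 := H1 y Py (monoT (Rmin_l d1 d2) c).
have a2 := H2 y Py (monoT (Rmin_r d1 d2) c).
have e1 : Rabs (f x - f y) < 1 by apply: Rlt_le_trans a1 (Rmin_l _ _).
have e2 : Rabs (f x - f y) < eps/(2*(b+1)) by apply: Rlt_le_trans a1 (Rmin_r _ _).
replace (f x * g x - f y * g y) with (g x * (f x - f y) + f y * (g x - g y)) by ring.
apply: Rle_lt_trans; first exact: Rabs_triang.
rewrite !Rabs_mult.
have fy : Rabs (f y) <= a.
  replace (f y) with (f x + - (f x - f y)) by ring.
  apply: Rle_trans; first exact: Rabs_triang. rewrite Rabs_Ropp /a; lra.
have s1 : b * Rabs (f x - f y) <= eps / 2.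
  apply: Rle_trans (Rmult_le_compat_l _ _ _ hb (Rlt_le _ _ e2)) _.
  apply: (Rmult_le_reg_r (2*(b+1))); first lra.
  have -> : b * (eps / (2 * (b + 1))) * (2 * (b + 1)) = b * eps by field; lra.
  have -> : eps / 2 * (2 * (b + 1)) = (b+1) * eps by field. nra.
have s2 : Rabs (f y) * Rabs (g x - g y) < eps / 2.
  apply: Rle_lt_trans (Rmult_le_compat_r _ _ _ (Rabs_pos _) fy) _.
  apply: Rlt_le_trans (Rmult_lt_compat_l _ _ _ ha a2) _.
  right; field; lra.
rewrite /b in s1; lra.
Qed.

Lemma rc_inv f : (forall t, P t -> f t <> 0) -> rc f -> rc (fun t => / f t).
Proof.
move=> nz Hf x Px eps he.
have fx0 := nz x Px.
set m := Rabs (f x).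
have hm : 0 < m by apply: Rabs_pos_lt.
have hmm : 0 < eps * m * m / 2.
  have : 0 < eps * m by apply: Rmult_lt_0_compat.
  nra.
have [d [hd Hd]] := Hf x Px (Rmin (m/2) (eps * m * m / 2)) ltac:(apply: Rmin_pos; lra).
exists d; split=> // y Py c.
have a := Hd y Py c.
have a1 : Rabs (f x - f y) < m/2 by apply: Rlt_le_trans a (Rmin_l _ _).
have a2 : Rabs (f x - f y) < eps * m * m / 2 by apply: Rlt_le_trans a (Rmin_r _ _).
have fy0 := nz y Py.
have hy : m/2 <= Rabs (f y).
  have := Rabs_triang (f x - f y) (f y). replace (f x - f y + f y) with (f x) by ring.
  rewrite -/m; lra.
replace (/ f x - / f y) with ((f y - f x) * / (f x * f y)) by (field; tauto).
rewrite Rabs_mult Rabs_inv Rabs_mult -/m -Rabs_Ropp.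
replace (- (f y - f x)) with (f x - f y) by ring.
apply: (Rmult_lt_reg_r (m * Rabs (f y))); first nra.
rewrite Rmult_assoc Rinv_l; last by (apply: Rgt_not_eq; nra).
rewrite Rmult_1_r. nra.
Qed.

Lemma rc_sum (I : Type) (s : seq I) (pr : pred I) (G : I -> T -> R) :
  (forall i, rc (G i)) -> rc (fun t => \big[Rplus/0]_(i <- s | pr i) G i t).
Proof.
move=> HG; elim: s => [|i s IH].
  have E : (fun t => \big[Rplus/0]_(j <- [::] | pr j) G j t) = (fun _ => 0).
    by apply: functional_extensionality => t; rewrite big_nil.
  rewrite E; exact: rc_const.
have E : (fun t => \big[Rplus/0]_(j <- i :: s | pr j) G j t) =
  (fun t => if pr i then G i t + \big[Rplus/0]_(j <- s | pr j) G j t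
            else \big[Rplus/0]_(j <- s | pr j) G j t).
  by apply: functional_extensionality => t; rewrite big_cons.
rewrite E; case: (pr i) => //; exact: rc_add.
Qed.

Lemma rc_prod (I : Type) (s : seq I) (pr : pred I) (G : I -> T -> R) :
  (forall i, rc (G i)) -> rc (fun t => \big[Rmult/1]_(i <- s | pr i) G i t).
Proof.
move=> HG; elim: s => [|i s IH].
  have E : (fun t => \big[Rmult/1]_(j <- [::] | pr j) G j t) = (fun _ => 1).
    by apply: functional_extensionality => t; rewrite big_nil.
  rewrite E; exact: rc_const.
have E : (fun t => \big[Rmult/1]_(j <- i :: s | pr j) G j t) =
  (fun t => if pr i then G i t * \big[Rmult/1]_(j <- s | pr j) G j t
            else \big[Rmult/1]_(j <- s | pr j) G j t).
  by apply: functional_extensionality => t; rewrite big_cons.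
rewrite E; case: (pr i) => //; exact: rc_mul.
Qed.

Lemma rc_proj (pi : T -> R) : (forall d x y, cT d x y -> Rabs (pi x - pi y) < d) -> rc pi.
Proof. move=> H x _ eps he; exists eps; split=> // y _ c; exact: H. Qed.

End Cont.

Section Fin.
Local Open Scope R_scope.
Lemma fin_min (I : finType) (Q : I -> R -> Prop) :
  (forall i d d', 0 < d' <= d -> Q i d -> Q i d') ->
  (forall i, exists d, 0 < d /\ Q i d) -> exists d, 0 < d /\ forall i, Q i d.
Proof.
move=> mon H.
suff key : forall s : seq I, exists d, 0 < d /\ forall i, i \in s -> Q i d.
  have [d [hd Hd]] := key (index_enum I).
  by exists d; split=> // i; apply: Hd; rewrite mem_index_enum.
elim=> [|i s [d [hd Hd]]]; first by exists 1; split=> //; lra.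
have [e [he He]] := H i.
exists (Rmin d e); split; first exact: Rmin_pos.
move=> j; rewrite inE => /orP [/eqP -> | js].
  apply: mon He; split; [exact: Rmin_pos | exact: Rmin_r].
apply: mon (Hd j js); split; [exact: Rmin_pos | exact: Rmin_l].
Qed.
End Fin.
Arguments rc {T} cT P f.
Arguments rc_ext {T cT P f g}.
Arguments rc_const {T cT P}.
Arguments rc_add {T cT P} monoT {f g}.
Arguments rc_opp {T cT P f}.
Arguments rc_mul {T cT P} monoT {f g}.
Arguments rc_inv {T cT P f}.
Arguments rc_sum {T cT P} monoT {_ s pr G}.
Arguments rc_prod {T cT P} monoT {_ s pr G}.
Arguments rc_proj {T cT P pi}.
Section Cont2.
Local Open Scope R_scope.
Variables (T : Type) (cT : R -> T -> T -> Prop) (P : T -> Prop).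
Hypothesis monoT : forall {d d' x y}, d <= d' -> cT d x y -> cT d' x y.

Lemma cont_mat m k (F : T -> mat m k) :
  (forall i j, rc cT P (fun t => F t i j)) -> cont_on cT mclose P F.
Proof.
move=> H x Px eps he.
have [d [hd Hd]] := @fin_min ('I_m * 'I_k)%type
  (fun ij d => forall y, P y -> cT d x y -> Rabs (F x ij.1 ij.2 - F y ij.1 ij.2) < eps)
  ltac:(move=> ij d d' [h1 h2] Hq y Py c; apply: Hq Py (monoT h2 c))
  ltac:(move=> [i j]; exact: H).
exists d; split=> // y Py c i j; exact: (Hd (i, j) y Py c).
Qed.

Lemma cont_vec m (F : T -> vec m) :
  (forall i, rc cT P (fun t => F t i)) -> cont_on cT vclose P F.
Proof.
move=> H x Px eps he.
have [d [hd Hd]] := @fin_min 'I_m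
  (fun i d => forall y, P y -> cT d x y -> Rabs (F x i - F y i) < eps)
  ltac:(move=> i d d' [h1 h2] Hq y Py c; apply: Hq Py (monoT h2 c))
  ltac:(move=> i; exact: H).
exists d; split=> // y Py c i; exact: (Hd i y Py c).
Qed.

Lemma cont_pt m (F : T -> pt m) :
  (forall i j, rc cT P (fun t => (F t).1 i j)) -> (forall i, rc cT P (fun t => (F t).2 i)) ->
  cont_on cT pclose P F.
Proof.
move=> H1 H2 x Px eps he.
have [d1 [h1 D1]] := @cont_mat _ _ (fun t => (F t).1) H1 x Px eps he.
have [d2 [h2 D2]] := @cont_vec _ (fun t => (F t).2) H2 x Px eps he.
exists (Rmin d1 d2); split; first exact: Rmin_pos.
move=> y Py c; split.
  exact: D1 Py (monoT (Rmin_l _ _) c).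
exact: D2 Py (monoT (Rmin_r _ _) c).
Qed.

Lemma rc_mmul m k p (A : T -> mat m k) (B : T -> mat k p) :
  (forall i j, rc cT P (fun t => A t i j)) -> (forall i j, rc cT P (fun t => B t i j)) ->
  forall i j, rc cT P (fun t => mmul (A t) (B t) i j).
Proof.
move=> HA HB i j; rewrite /mmul.
apply: (rc_sum (@monoT)) => l; apply: (rc_mul (@monoT)); [exact: HA | exact: HB].
Qed.

Lemma rc_mvmul m k (A : T -> mat m k) (x : T -> vec k) :
  (forall i j, rc cT P (fun t => A t i j)) -> (forall i, rc cT P (fun t => x t i)) ->
  forall i, rc cT P (fun t => mvmul (A t) (x t) i).
Proof.
move=> HA HB i; rewrite /mvmul.
apply: (rc_sum (@monoT)) => l; apply: (rc_mul (@monoT)); [exact: HA | exact: HB].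
Qed.

Lemma rc_msub m k (A B : T -> mat m k) :
  (forall i j, rc cT P (fun t => A t i j)) -> (forall i j, rc cT P (fun t => B t i j)) ->
  forall i j, rc cT P (fun t => msub (A t) (B t) i j).
Proof. move=> HA HB i j; rewrite /msub; apply: (rc_add (@monoT)); [exact: HA| apply: rc_opp; exact: HB]. Qed.

Lemma rc_vadd m (A B : T -> vec m) :
  (forall i, rc cT P (fun t => A t i)) -> (forall i, rc cT P (fun t => B t i)) ->
  forall i, rc cT P (fun t => vadd (A t) (B t) i).
Proof. move=> HA HB i; rewrite /vadd; apply: (rc_add (@monoT)); [exact: HA| exact: HB]. Qed.

Lemma rc_vsub m (A B : T -> vec m) :
  (forall i, rc cT P (fun t => A t i)) -> (forall i, rc cT P (fun t => B t i)) ->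
  forall i, rc cT P (fun t => vsub (A t) (B t) i).
Proof. move=> HA HB i; rewrite /vsub; apply: (rc_add (@monoT)); [exact: HA| apply: rc_opp; exact: HB]. Qed.

Lemma rc_det k (A : T -> 'M[R]_k) :
  (forall i j, rc cT P (fun t => A t i j)) -> rc cT P (fun t => determinant (A t)).
Proof.
move=> HA; rewrite /determinant.
apply: (rc_sum (@monoT)) => s; apply: (rc_mul (@monoT)); first exact: rc_const.
apply: (rc_prod (@monoT)) => // i; exact: HA.
Qed.
End Cont2.
Set Implicit Arguments. Unset Strict Implicit.
Section Bridge.
Local Open Scope ring_scope.

Definition Mx {m k} (A : mat m k) : 'M[R]_(m,k) := \matrix_(i,j) A i j.
Definition Fm {m k} (B : 'M[R]_(m,k)) : mat m k := fun i j => B i j.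
Definition Vx {m} (x : vec m) : 'cV[R]_m := \col_i x i.
Definition Fv {m} (c : 'cV[R]_m) : vec m := fun i => c i ord0.

Lemma FmK m k (A : mat m k) : Fm (Mx A) = A.
Proof. apply: functional_extensionality => i; apply: functional_extensionality => j. by rewrite /Fm mxE. Qed.
Lemma MxK m k (B : 'M[R]_(m,k)) : Mx (Fm B) = B.
Proof. by apply/matrixP => i j; rewrite mxE. Qed.
Lemma FvK m (x : vec m) : Fv (Vx x) = x.
Proof. apply: functional_extensionality => i. by rewrite /Fv mxE. Qed.
Lemma VxK m (c : 'cV[R]_m) : Vx (Fv c) = c.
Proof. apply/matrixP => i j; rewrite mxE /Fv. by rewrite (ord1 j). Qed.
Lemma Mx_inj m k (A B : mat m k) : Mx A = Mx B -> A = B.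
Proof. by move=> E; rewrite -(FmK A) E FmK. Qed.
Lemma Vx_inj m (x y : vec m) : Vx x = Vx y -> x = y.
Proof. by move=> E; rewrite -(FvK x) E FvK. Qed.

Lemma Mx_mmul m k p (A : mat m k) (B : mat k p) : Mx (mmul A B) = Mx A *m Mx B.
Proof. apply/matrixP => i j; rewrite !mxE /mmul; apply: eq_bigr => l _; by rewrite !mxE. Qed.
Lemma Vx_mvmul m k (A : mat m k) (x : vec k) : Vx (mvmul A x) = Mx A *m Vx x.
Proof. apply/matrixP => i j; rewrite !mxE /mvmul; apply: eq_bigr => l _; by rewrite !mxE. Qed.
Lemma Mx_msub m k (A B : mat m k) : Mx (msub A B) = Mx A - Mx B.
Proof. by apply/matrixP => i j; rewrite !mxE. Qed.
Lemma Mx_idm m : Mx (idm m) = 1%:M.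
Proof. apply/matrixP => i j; rewrite !mxE /idm. by case: (i == j). Qed.
Lemma Mx_mzero m k : Mx (@mzero m k) = 0.
Proof. by apply/matrixP => i j; rewrite !mxE. Qed.
Lemma Vx_vadd m (x y : vec m) : Vx (vadd x y) = Vx x + Vx y.
Proof. by apply/matrixP => i j; rewrite !mxE. Qed.
Lemma Vx_vsub m (x y : vec m) : Vx (vsub x y) = Vx x - Vx y.
Proof. by apply/matrixP => i j; rewrite !mxE. Qed.
Lemma Vx_vzero m : Vx (@vzero m) = 0.
Proof. by apply/matrixP => i j; rewrite !mxE. Qed.

Lemma Mx_blkS n (E : mat (n+n) (n+n)) : Mx (blkS E) = ulsubmx (Mx E).
Proof. by apply/matrixP => i j; rewrite !mxE. Qed.
Lemma Mx_blkO n (E : mat (n+n) (n+n)) : Mx (blkO E) = ursubmx (Mx E).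
Proof. by apply/matrixP => i j; rewrite !mxE. Qed.
Lemma Mx_blkC n (E : mat (n+n) (n+n)) : Mx (blkC E) = dlsubmx (Mx E).
Proof. by apply/matrixP => i j; rewrite !mxE. Qed.
Lemma Mx_blkT n (E : mat (n+n) (n+n)) : Mx (blkT E) = drsubmx (Mx E).
Proof. by apply/matrixP => i j; rewrite !mxE. Qed.

Lemma invertibleE m (A : mat m m) : invertible A <-> Mx A \in unitmx.
Proof.
split.
  move=> [B [h1 h2]]. have := f_equal Mx h1; rewrite Mx_mmul Mx_idm.
  by move=> /mulmx1_unit [].
move=> u; exists (Fm (invmx (Mx A))); split; apply: Mx_inj;
  rewrite Mx_mmul Mx_idm MxK; [exact: mulmxV | exact: mulVmx].
Qed.

Lemma minvE m (A : mat m m) : invertible A -> Mx (minv A) = invmx (Mx A).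
Proof.
move=> hA; rewrite /minv.
have [h1 h2] := epsilon_spec (inhabits (idm m))
  (fun B => mmul A B = idm m /\ mmul B A = idm m) hA.
set B := epsilon _ _ in h1 h2 *.
have u : Mx A \in unitmx by apply/invertibleE.
have := f_equal Mx h1; rewrite Mx_mmul Mx_idm => e.
by rewrite -(mulKmx u (Mx B)) e mulmx1.
Qed.

Variable n : nat.
Definition Gm (E : 'M[R]_(n+n)) :=
  [/\ ursubmx E = 0, ulsubmx E \in unitmx & drsubmx E \in unitmx].

Lemma GmE E : Gm E -> E = block_mx (ulsubmx E) 0 (dlsubmx E) (drsubmx E).
Proof. by case=> h _ _; rewrite -h submxK. Qed.

Lemma Gm_unit E : Gm E -> E \in unitmx.
Proof.
move=> h; rewrite (GmE h); case: h => _ u1 u2.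
by rewrite unitmxE det_lblock unitrM -!unitmxE u1 u2.
Qed.

Lemma block_conj (S1 C1 T1 S0 C0 T0 a b c d : 'M[R]_n) :
  S1 \in unitmx -> T1 \in unitmx ->
  block_mx a b c d *m block_mx S1 0 C1 T1 = block_mx S1 0 C1 T1 *m block_mx S0 0 C0 T0 ->
  [/\ b = 0, a = S1 *m S0 *m invmx S1, d = T1 *m T0 *m invmx T1
    & c *m S1 + d *m C1 = C1 *m S0 + T1 *m C0].
Proof.
move=> u1 t1; rewrite !mulmx_block => /eq_block_mx [h1 h2 h3 h4].
move: h2 h4; rewrite !mulmx0 !mul0mx ?add0r ?addr0 => h2 h4.
have hb : b = 0 by rewrite -(mulmxK t1 b) h2 mul0mx.
move: h1; rewrite hb !mul0mx !addr0 => h1.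
split=> //.
  by rewrite -h1 mulmxK.
by rewrite -h4 mulmxK.
Qed.

Lemma Gm_conjE E1 E0 : Gm E1 -> Gm E0 ->
  let P := E1 *m E0 *m invmx E1 in
  [/\ ursubmx P = 0, ulsubmx P = ulsubmx E1 *m ulsubmx E0 *m invmx (ulsubmx E1),
      drsubmx P = drsubmx E1 *m drsubmx E0 *m invmx (drsubmx E1)
    & dlsubmx P *m ulsubmx E1 + drsubmx P *m dlsubmx E1 =
      dlsubmx E1 *m ulsubmx E0 + drsubmx E1 *m dlsubmx E0].
Proof.
move=> g1 g0 P.
have key : P *m E1 = E1 *m E0 by rewrite /P mulmxKV // Gm_unit.
have [_ u1 t1] := g1.
have := @block_conj (ulsubmx E1) (dlsubmx E1) (drsubmx E1)
  (ulsubmx E0) (dlsubmx E0) (drsubmx E0)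
  (ulsubmx P) (ursubmx P) (dlsubmx P) (drsubmx P) u1 t1.
rewrite submxK -(GmE g1) -(GmE g0); by apply.
Qed.

Lemma Gm_conj E1 E0 : Gm E1 -> Gm E0 -> Gm (E1 *m E0 *m invmx E1).
Proof.
move=> g1 g0; have [h1 h2 h3 _] := Gm_conjE g1 g0.
case: g1 => _ u1 t1; case: g0 => _ u0 t0.
by split=> //; [rewrite h2 | rewrite h3]; rewrite !unitmx_mul ?unitmx_inv ?u1 ?u0 ?t1 ?t0.
Qed.

Lemma Gm_inv E : Gm E -> Gm (invmx E).
Proof.
move=> g; have u := Gm_unit g.
have key : E *m invmx E = 1%:M by rewrite mulmxV.
set F := invmx E in key *; rewrite -[F]submxK {1}(GmE g) mulmx_block (scalar_mx_block n n 1) in key.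
move/eq_block_mx: key => [h1 h2 h3 h4].
case: g => _ u1 t1.
move: h1 h2 h4; rewrite !mul0mx !addr0 => h1 h2 h4.
have hb : ursubmx F = 0 by rewrite -(mulKmx u1 (ursubmx F)) h2 mulmx0.
move: h4; rewrite hb mulmx0 add0r => h4.
split=> //.
  by case: (mulmx1_unit h1) => _ hh.
by case: (mulmx1_unit h4) => _ hh.
Qed.

End Bridge.
Section C3.
Variables (T : Type) (cT : R -> T -> T -> Prop) (P : T -> Prop).
Hypothesis monoT : forall d d' x y, Rle d d' -> cT d x y -> cT d' x y.

Lemma rc_minv k (A : T -> mat k k) :
  (forall t, P t -> invertible (A t)) -> (forall i j, rc cT P (fun t => A t i j)) ->
  forall i j, rc cT P (fun t => minv (A t) i j).
Proof.
move=> inv HA i j.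
apply: (rc_ext (g := fun t => GRing.mul (GRing.inv (determinant (Mx (A t))))
                              (\adj (Mx (A t)) i j))).
  move=> t Pt; have u := proj1 (invertibleE (A t)) (inv t Pt).
  have := f_equal (fun M : 'M[R]_k => M i j) (minvE (inv t Pt)).
  by rewrite /= mxE /invmx u mxE.
apply: (rc_mul monoT).
  apply: rc_inv.
    move=> t Pt; have u := proj1 (invertibleE (A t)) (inv t Pt).
    by move: u; rewrite unitmxE unitfE => /eqP.
  apply: (@rc_det _ _ _ monoT _ (fun t => Mx (A t))) => a b.
  apply: (rc_ext (g := fun t => A t a b)); first by move=> t _; rewrite mxE.
  exact: HA.
apply: (rc_ext (g := fun t => GRing.mul ((-1) ^+ (j + i))%R
   (determinant (row' j (col' i (Mx (A t))))))).
  by move=> t _; rewrite mxE.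
apply: (rc_mul monoT); first exact: rc_const.
apply: (@rc_det _ _ _ monoT _ (fun t => row' j (col' i (Mx (A t))))) => a b.
apply: (rc_ext (g := fun t => A t (lift j a) (lift i b))); first by move=> t _; rewrite !mxE.
exact: HA.
Qed.
End C3.
Section Q.
Local Open Scope ring_scope.
Variable n : nat.
Implicit Types p q : pt n.

Lemma inX_Gm p : inX p <-> Gm (Mx p.1).
Proof.
rewrite /inX /inG !invertibleE Mx_blkS Mx_blkT; split.
  move=> [h1 [h2 h3]]; split=> //; by rewrite -Mx_blkO h1 Mx_mzero.
move=> [h1 h2 h3]; split=> //; apply: Mx_inj; by rewrite Mx_blkO Mx_mzero.
Qed.

Lemma inX_unit p : inX p -> Mx p.1 \in unitmx.
Proof. by move/inX_Gm/Gm_unit. Qed.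

Lemma inX_inv p : inX p -> invertible p.1.
Proof. by move/inX_unit/invertibleE. Qed.

Lemma qop1 p q : inX q -> Mx (qop p q).1 = Mx q.1 *m Mx p.1 *m invmx (Mx q.1).
Proof. by move=> h; rewrite /qop /= !Mx_mmul minvE //; exact: inX_inv. Qed.

Lemma qop2 p q : Vx (qop p q).2 =
  ulsubmx (Mx q.1) *m Vx p.2 + (1%:M - ulsubmx (Mx q.1)) *m Vx q.2.
Proof. by rewrite /qop /= Vx_vadd !Vx_mvmul Mx_msub Mx_idm Mx_blkS. Qed.

Lemma qop_inX p q : inX p -> inX q -> inX (qop p q).
Proof. move=> hp hq; apply/inX_Gm; rewrite qop1 //; apply: Gm_conj; exact/inX_Gm. Qed.

Lemma pt_eq p q : Mx p.1 = Mx q.1 -> Vx p.2 = Vx q.2 -> p = q.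
Proof. case: p q => [a x] [b y] /= /Mx_inj -> /Vx_inj -> //. Qed.

Lemma qop_id p : inX p -> qop p p = p.
Proof.
move=> h; apply: pt_eq; first by rewrite qop1 // mulmxK // inX_unit.
by rewrite qop2 -mulmxDl addrC subrK mul1mx.
Qed.

Definition ginv q p : pt n :=
  (mmul (mmul (Fm (invmx (Mx q.1))) p.1) q.1,
   mvmul (Fm (invmx (ulsubmx (Mx q.1)))) (vsub p.2 (mvmul (msub (idm n) (blkS q.1)) q.2))).

Lemma ginv1 q p : Mx (ginv q p).1 = invmx (Mx q.1) *m Mx p.1 *m Mx q.1.
Proof. by rewrite /ginv /= !Mx_mmul MxK. Qed.

Lemma ginv2 q p : Vx (ginv q p).2 =
  invmx (ulsubmx (Mx q.1)) *m (Vx p.2 - (1%:M - ulsubmx (Mx q.1)) *m Vx q.2).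
Proof. by rewrite /ginv /= Vx_mvmul MxK Vx_vsub Vx_mvmul Mx_msub Mx_idm Mx_blkS. Qed.

Lemma ginv_inX q p : inX q -> inX p -> inX (ginv q p).
Proof.
move=> hq hp; apply/inX_Gm; rewrite ginv1.
have g := Gm_inv (proj1 (inX_Gm q) hq).
rewrite -{2}(invmxK (Mx q.1)); apply: Gm_conj => //; exact/inX_Gm.
Qed.

Lemma ginvK1 q p : inX q -> ginv q (qop p q) = p.
Proof.
move=> hq; have u := inX_unit hq.
have [_ uS _] := proj1 (inX_Gm q) hq.
apply: pt_eq.
  by rewrite ginv1 qop1 // !mulmxA mulVmx // mul1mx mulmxKV.
by rewrite ginv2 qop2 addrK mulKmx.
Qed.

Lemma ginvK2 q p : inX q -> qop (ginv q p) q = p.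
Proof.
move=> hq; have u := inX_unit hq.
have [_ uS _] := proj1 (inX_Gm q) hq.
apply: pt_eq.
  by rewrite qop1 // ginv1 !mulmxA mulmxV // mul1mx mulmxK.
by rewrite qop2 ginv2 mulKVmx // subrK.
Qed.

End Q.
Section V.
Local Open Scope ring_scope.
Variable n : nat.
Lemma addBB (a b w : 'cV[R]_n) : (a + w) - (b + w) = a - b.
Proof. by rewrite opprD addrACA subrr addr0. Qed.

Lemma lin_comb (K : 'M[R]_n) (u v : 'cV[R]_n) : K *m u + (1%:M - K) *m v = K *m (u - v) + v.
Proof. by rewrite mulmxBl mul1mx mulmxBr addrCA [LHS]addrC. Qed.

Lemma vec_dist (Sz Sy : 'M[R]_n) (a b c : 'cV[R]_n) : Sz \in unitmx ->
  Sz *m (Sy *m a + (1%:M - Sy) *m b) + (1%:M - Sz) *m c =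
  Sz *m Sy *m invmx Sz *m (Sz *m a + (1%:M - Sz) *m c) +
  (1%:M - Sz *m Sy *m invmx Sz) *m (Sz *m b + (1%:M - Sz) *m c).
Proof.
move=> u.
rewrite (lin_comb (Sz *m Sy *m invmx Sz)) addBB -mulmxBr mulmxA mulmxKV //.
by rewrite (lin_comb Sy a b) mulmxDr mulmxA -addrA.
Qed.
End V.
Section Q2.
Local Open Scope ring_scope.
Variable n : nat.
Implicit Types p q x y z : pt n.

Lemma S_conj p q : inX p -> inX q ->
  ulsubmx (Mx (qop p q).1) = ulsubmx (Mx q.1) *m ulsubmx (Mx p.1) *m invmx (ulsubmx (Mx q.1)).
Proof.
move=> hp hq; rewrite qop1 //.
by have [_ -> _ _] := Gm_conjE (proj1 (inX_Gm q) hq) (proj1 (inX_Gm p) hp).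
Qed.

Lemma T_conj p q : inX p -> inX q ->
  drsubmx (Mx (qop p q).1) = drsubmx (Mx q.1) *m drsubmx (Mx p.1) *m invmx (drsubmx (Mx q.1)).
Proof.
move=> hp hq; rewrite qop1 //.
by have [_ _ -> _] := Gm_conjE (proj1 (inX_Gm q) hq) (proj1 (inX_Gm p) hp).
Qed.

Lemma C_conj p q : inX p -> inX q ->
  dlsubmx (Mx (qop p q).1) *m ulsubmx (Mx q.1) + drsubmx (Mx (qop p q).1) *m dlsubmx (Mx q.1) =
  dlsubmx (Mx q.1) *m ulsubmx (Mx p.1) + drsubmx (Mx q.1) *m dlsubmx (Mx p.1).
Proof.
move=> hp hq; rewrite qop1 //.
by have [_ _ _ ->] := Gm_conjE (proj1 (inX_Gm q) hq) (proj1 (inX_Gm p) hp).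
Qed.

Lemma qop_dist x y z : inX x -> inX y -> inX z ->
  qop (qop x y) z = qop (qop x z) (qop y z).
Proof.
move=> hx hy hz.
have hyz := qop_inX hy hz.
have uz := inX_unit hz. have uy := inX_unit hy. have uyz := inX_unit hyz.
apply: pt_eq.
  rewrite !qop1 //.
  rewrite -[LHS](mulmxK uyz); congr (_ *m _).
  rewrite qop1 // !mulmxA !mulmxKV //.
  by rewrite qop1.
rewrite !qop2 (S_conj hy hz).
have [_ uSz _] := proj1 (inX_Gm z) hz.
exact: vec_dist.
Qed.
End Q2.
Section V2.
Local Open Scope ring_scope.
Variable n : nat.
Lemma zm4 (V : zmodType) (A B P Q : V) : Q + (P + B) = A + B + (P + Q - A).
Proof.
rewrite [P + Q - A]addrC [RHS]addrA [A + B + - A]addrAC subrr add0r.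
by rewrite [RHS]addrC [P + Q]addrC -addrA.
Qed.

Lemma vec_coc (Sz Sy Tz Cy Cz Kt D : 'M[R]_n) (x y z : 'cV[R]_n) :
  D *m Sz + Kt *m Cz = Cz *m Sy + Tz *m Cy ->
  Tz *m (Cy *m (x - y)) + Cz *m ((Sy *m x + (1%:M - Sy) *m y) - z) =
  Kt *m (Cz *m (x - z)) + (1%:M - Kt) *m (Cz *m (y - z)) +
  D *m ((Sz *m x + (1%:M - Sz) *m z) - (Sz *m y + (1%:M - Sz) *m z)).
Proof.
move=> hC.
rewrite addBB -mulmxBr (mulmxA D) -[D *m Sz](addrK (Kt *m Cz)) hC.
rewrite (mulmxBl (Cz *m Sy + Tz *m Cy)) (mulmxDl (Cz *m Sy)).
rewrite (lin_comb Kt) -mulmxBr addBB.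
rewrite (lin_comb Sy) -addrA (mulmxDr Cz) !mulmxA.
exact: zm4.
Qed.
End V2.
Section M.
Local Open Scope ring_scope.
Variable n : nat.
Implicit Types p q x y z : pt n.

Lemma eta7E p q a : Vx (eta7 p q a) = drsubmx (Mx q.1) *m Vx a.
Proof. by rewrite /eta7 Vx_mvmul Mx_blkT. Qed.
Lemma tau7E p q a : Vx (tau7 p q a) = (1%:M - drsubmx (Mx q.1)) *m Vx a.
Proof. by rewrite /tau7 Vx_mvmul Mx_msub Mx_idm Mx_blkT. Qed.
Lemma kappa7E p q : Vx (kappa7 p q) = dlsubmx (Mx q.1) *m (Vx p.2 - Vx q.2).
Proof. by rewrite /kappa7 Vx_mvmul Mx_blkC Vx_vsub. Qed.

Lemma mod_ax1 x y z a : inX x -> inX y -> inX z ->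
  eta7 (qop x y) z (eta7 x y a) = eta7 (qop x z) (qop y z) (eta7 x z a).
Proof.
move=> hx hy hz; have [_ _ tz] := proj1 (inX_Gm z) hz.
apply: Vx_inj; rewrite !eta7E (T_conj hy hz) !mulmxA mulmxKV //.
Qed.

Lemma mod_ax2 x y z a : inX x -> inX y -> inX z ->
  eta7 (qop x y) z (tau7 x y a) = tau7 (qop x z) (qop y z) (eta7 y z a).
Proof.
move=> hx hy hz; have [_ _ tz] := proj1 (inX_Gm z) hz.
apply: Vx_inj; rewrite eta7E !tau7E eta7E (T_conj hy hz).
by rewrite !mulmxBl !mul1mx mulmxBr !mulmxA mulmxKV.
Qed.

Lemma mod_ax3 x y z a : inX x -> inX y -> inX z ->
  tau7 (qop x y) z a = vadd (eta7 (qop x z) (qop y z) (tau7 x z a))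
                            (tau7 (qop x z) (qop y z) (tau7 y z a)).
Proof.
move=> hx hy hz.
apply: Vx_inj; rewrite Vx_vadd eta7E !tau7E.
by rewrite -mulmxDl [_ + (1%:M - _)]addrC subrK mul1mx.
Qed.

Lemma mod_ax4 x a : vadd (tau7 x x a) (eta7 x x a) = a.
Proof. by apply: Vx_inj; rewrite Vx_vadd eta7E tau7E -mulmxDl subrK mul1mx. Qed.

Lemma eta_add p q : Defs.additive (eta7 p q).
Proof. by move=> a b; apply: Vx_inj; rewrite Vx_vadd !eta7E Vx_vadd mulmxDr. Qed.
Lemma tau_add p q : Defs.additive (tau7 p q).
Proof. by move=> a b; apply: Vx_inj; rewrite Vx_vadd !tau7E Vx_vadd mulmxDr. Qed.

Lemma eta_bij p q : inX q -> bijective_map (eta7 p q).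
Proof.
move=> hq; have [_ _ tq] := proj1 (inX_Gm q) hq.
exists (fun a => mvmul (Fm (invmx (drsubmx (Mx q.1)))) a); split=> a; apply: Vx_inj.
  by rewrite Vx_mvmul MxK eta7E mulKmx.
by rewrite eta7E Vx_mvmul MxK mulKVmx.
Qed.

Lemma coc_id x y z : inX x -> inX y -> inX z ->
  vadd (eta7 (qop x y) z (kappa7 x y)) (kappa7 (qop x y) z) =
  vadd (vadd (eta7 (qop x z) (qop y z) (kappa7 x z))
             (tau7 (qop x z) (qop y z) (kappa7 y z)))
       (kappa7 (qop x z) (qop y z)).
Proof.
move=> hx hy hz.
apply: Vx_inj; rewrite !Vx_vadd !eta7E tau7E !kappa7E !qop2.
apply: vec_coc; exact: C_conj.
Qed.

Lemma kappa_diag x : kappa7 x x = vzero.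
Proof. by apply: Vx_inj; rewrite kappa7E subrr mulmx0 Vx_vzero. Qed.

End M.
Section N.
Local Open Scope ring_scope.
Variable n : nat.
Hypothesis hn : (1 <= n)%N.

Definition Ey : 'M[R]_(n+n) := block_mx 1%:M 0 1%:M 1%:M.
Definition px : pt n := (Fm 1%:M, fun _ => R1).
Definition py : pt n := (Fm Ey, vzero).

Lemma Gm_Ey : Gm Ey.
Proof. by rewrite /Ey; split; rewrite ?block_mxKur ?block_mxKul ?block_mxKdr ?unitmx1. Qed.

Lemma Gm_1 : Gm (1%:M : 'M[R]_(n+n)).
Proof. by rewrite (scalar_mx_block n n 1); split; rewrite ?block_mxKur ?block_mxKul ?block_mxKdr ?unitmx1. Qed.

Lemma px_in : inX px. Proof. by apply/inX_Gm; rewrite /px /= MxK; exact: Gm_1. Qed.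
Lemma py_in : inX py. Proof. by apply/inX_Gm; rewrite /py /= MxK; exact: Gm_Ey. Qed.

Lemma qop_pxy : qop px py = px.
Proof.
apply: pt_eq.
  rewrite qop1; last exact: py_in.
  rewrite /px /py /= !MxK mulmx1 mulmxV //; apply: Gm_unit; exact: Gm_Ey.
rewrite qop2 /py /= MxK /Ey block_mxKul subrr mul0mx addr0 mul1mx //.
Qed.

Lemma not_B2 : ~ in_B2 (@qop n) (@eta7 n) (@tau7 n) (@kappa7 n).
Proof.
move=> [f [_ Hf]].
have := Hf px py px_in py_in.
rewrite qop_pxy => /(f_equal Vx).
rewrite Vx_vsub Vx_vadd eta7E tau7E kappa7E /py /= MxK /Ey block_mxKdr block_mxKdl.
rewrite subrr mul0mx addr0 mul1mx !mul1mx subrr Vx_vzero subr0 => /matrixP /(_ (Ordinal hn) ord0).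
rewrite !mxE => h; exact: R1_neq_R0 h.
Qed.
End N.
Section C4.
Local Open Scope R_scope.
Variable n : nat.

Lemma mono_v : forall d d' (x y : vec n), d <= d' -> vclose d x y -> vclose d' x y.
Proof. move=> d d' x y h c i; have := c i; lra. Qed.
Lemma mono_p : forall d d' (x y : pt n), d <= d' -> pclose d x y -> pclose d' x y.
Proof. move=> d d' x y h [c1 c2]; split=> [i j|i]; [have := c1 i j | have := c2 i]; lra. Qed.
Lemma mono_pr : forall d d' (x y : pt n * pt n), d <= d' ->
  prclose pclose pclose d x y -> prclose pclose pclose d' x y.
Proof. move=> d d' x y h [c1 c2]; split; exact: mono_p h _. Qed.

Lemma rcv (P : vec n -> Prop) i : rc vclose P (fun t => t i).
Proof. apply: rc_proj => d x y c; exact: c i. Qed.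
Lemma rcp1 (P : pt n -> Prop) i j : rc pclose P (fun t => t.1 i j).
Proof. apply: rc_proj => d x y [c _]; exact: c i j. Qed.
Lemma rcp2 (P : pt n -> Prop) i : rc pclose P (fun t => t.2 i).
Proof. apply: rc_proj => d x y [_ c]; exact: c i. Qed.
Lemma rcq11 (P : pt n * pt n -> Prop) i j : rc (prclose pclose pclose) P (fun t => t.1.1 i j).
Proof. apply: rc_proj => d x y [[c _] _]; exact: c i j. Qed.
Lemma rcq12 (P : pt n * pt n -> Prop) i : rc (prclose pclose pclose) P (fun t => t.1.2 i).
Proof. apply: rc_proj => d x y [[_ c] _]; exact: c i. Qed.
Lemma rcq21 (P : pt n * pt n -> Prop) i j : rc (prclose pclose pclose) P (fun t => t.2.1 i j).
Proof. apply: rc_proj => d x y [_ [c _]]; exact: c i j. Qed.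
Lemma rcq22 (P : pt n * pt n -> Prop) i : rc (prclose pclose pclose) P (fun t => t.2.2 i).
Proof. apply: rc_proj => d x y [_ [_ c]]; exact: c i. Qed.
End C4.

Ltac rcstep mono :=
  match goal with
  | |- forall _, _ => intro
  | H : PX2 ?t |- invertible ?t.2.1 => exact: (inX_inv (proj2 H))
  | |- rc _ _ (fun t => mmul _ _ _ _) => apply: (rc_mmul _ _ _ mono)
  | |- rc _ _ (fun t => mvmul _ _ _) => apply: (rc_mvmul _ _ _ mono)
  | |- rc _ _ (fun t => msub _ _ _ _) => apply: (rc_msub _ _ _ mono)
  | |- rc _ _ (fun t => vadd _ _ _) => apply: (rc_vadd _ _ _ mono)
  | |- rc _ _ (fun t => vsub _ _ _) => apply: (rc_vsub _ _ _ mono)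
  | |- rc _ _ (fun t => minv _ _ _) => apply: (@rc_minv _ _ _ mono)
  | _ => first [ exact: rc_const | exact: rcv | exact: rcp1 | exact: rcp2
               | exact: rcq11 | exact: rcq12 | exact: rcq21 | exact: rcq22 ]
  end.

Section C5.
Variable n : nat.

Lemma cont_op : cont_on (prclose pclose pclose) pclose PX2 (fun a : pt n * pt n => qop a.1 a.2).
Proof.
apply: (@cont_pt _ _ _ (@mono_pr n)); rewrite /qop /blkS /=.
  repeat rcstep (@mono_pr n).
repeat rcstep (@mono_pr n).
Qed.
End C5.
Section Fin2.
Variable n : nat.

Lemma cont_g (q : pt n) : cont_on pclose pclose inX (ginv q).
Proof.
apply: (@cont_pt _ _ _ (@mono_p n)); rewrite /ginv /blkS /=.
  repeat rcstep (@mono_p n).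
repeat rcstep (@mono_p n).
Qed.

Lemma vcont_eta (x y : pt n) : vcont (eta7 x y).
Proof. apply: (@cont_vec _ _ _ (@mono_v n)); rewrite /eta7; repeat rcstep (@mono_v n). Qed.
Lemma vcont_tau (x y : pt n) : vcont (tau7 x y).
Proof. apply: (@cont_vec _ _ _ (@mono_v n)); rewrite /tau7; repeat rcstep (@mono_v n). Qed.
Lemma cont_kappa : cont_on (prclose pclose pclose) vclose PX2 (fun a : pt n * pt n => kappa7 a.1 a.2).
Proof. apply: (@cont_vec _ _ _ (@mono_pr n)); rewrite /kappa7 /blkC /=; repeat rcstep (@mono_pr n). Qed.
End Fin2.

Theorem mainTheorem7 (n : nat) (hn : (1 <= n)%nat) :
  is_top_quandle (@qop n) /\
  is_top_module (@qop n) (@eta7 n) (@tau7 n) /\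
  in_Z2 (@qop n) (@eta7 n) (@tau7 n) (@kappa7 n) /\
  ~ in_B2 (@qop n) (@eta7 n) (@tau7 n) (@kappa7 n).
Proof.
split; [|split; [|split]].
- split; [exact: qop_inX|split; [exact: qop_id|split; [|split; [exact: qop_dist|exact: cont_op]]]].
  move=> y hy; exists (ginv y); split; [|split; [|split]].
  + move=> x hx; exact: ginv_inX.
  + move=> x _; exact: ginvK1.
  + move=> x _; exact: ginvK2.
  + exact: cont_g.
- split; [|split].
  + move=> x y hx hy; split; [exact: eta_add|split; [exact: eta_bij|split; [exact: vcont_eta|split; [exact: tau_add|exact: vcont_tau]]]].
  + move=> x y z hx hy hz; split; [move=> a; exact: mod_ax1|split; [move=> a; exact: mod_ax2|move=> a; exact: mod_ax3]].
  + move=> x _ a; exact: mod_ax4.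
- split; [exact: cont_kappa|split; [move=> x _; exact: kappa_diag|exact: coc_id]].
- exact: not_B2.
Qed.
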